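(* Let $R$ be a $*$-ring and $a\in R$. If $a$ is strongly $*$-regular, then $a$ is strongly $\pi$-$*$-regular; and if $a$ is strongly $\pi$-$*$-regular, then $a$ is strongly $*$-clean.
   Context: A $*$-ring is a ring with identity with an involution $*$. A projection is $p$ with $p^2=p=p^*$. $a$ is strongly $*$-regular if $a=pu=up$ for a projection $p$ and a unit $u$. $a$ is strongly $\pi$-$*$-regular if there exist a projection $e$, a unit $u$ and $m\ge1$ with $a^m=eu$ and $a,e,u$ pairwise commuting. $a$ is strongly $*$-clean if $a=p+u$ with $p$ a projection, $u$ a unit and $pu=up$. *)

(* Defs.v *)
From HB Require Import structures.
From mathcomp Require Import all_boot all_order all_algebra.
Set Implicit Arguments. Unset Strict Implicit. Unset Printing Implicit Defensive.
Import GRing.Theory.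
Local Open Scope ring_scope.

Record involution (R : pzRingType) := Involution {
  inv_fun :> R -> R;
  inv_add : forall x y, inv_fun (x + y) = inv_fun x + inv_fun y;
  inv_mul : forall x y, inv_fun (x * y) = inv_fun y * inv_fun x;
  inv_invol : forall x, inv_fun (inv_fun x) = x
}.

Definition is_unit (R : pzRingType) (u : R) : Prop :=
  exists v : R, u * v = 1 /\ v * u = 1.

Definition is_projection (R : pzRingType) (s : involution R) (p : R) : Prop :=
  p * p = p /\ s p = p.

Definition strongly_star_regular (R : pzRingType) (s : involution R) (a : R) : Prop :=
  exists p u : R, is_projection s p /\ is_unit u /\ a = p * u /\ a = u * p.

Definition strongly_pi_star_regular (R : pzRingType) (s : involution R) (a : R) : Prop :=
  exists (e u : R) (m : nat), (1 <= m)%N /\ is_projection s e /\ is_unit u /\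
    a ^+ m = e * u /\ a * e = e * a /\ a * u = u * a /\ e * u = u * e.

Definition strongly_star_clean (R : pzRingType) (s : involution R) (a : R) : Prop :=
  exists p u : R, is_projection s p /\ is_unit u /\ a = p + u /\ p * u = u * p.

(* Main.v *)
Require Import Defs.
From mathcomp Require Import all_boot all_order all_algebra.
Import GRing.Theory.
Local Open Scope ring_scope.

Lemma inv1 (R : pzRingType) (s : involution R) : s 1 = 1.
Proof.
have h := inv_invol s 1.
have e1 : s 1 = s 1 * s (s 1) by rewrite h mulr1.
by rewrite e1 -inv_mul mulr1 h.
Qed.

Lemma invN (R : pzRingType) (s : involution R) x : s (- x) = - s x.
Proof.
have h0 : s 0 = 0.
  have h := inv_add s 0 0; rewrite addr0 in h.
  by apply: (addrI (s 0)); rewrite addr0 -h.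
by apply: (addIr (s x)); rewrite -inv_add !addNr h0.
Qed.

Lemma comm_inv (R : pzRingType) (x u v : R) :
  u * v = 1 -> v * u = 1 -> GRing.comm x u -> GRing.comm x v.
Proof.
move=> uv vu cxu; rewrite /GRing.comm.
symmetry; transitivity (v * x * (u * v)); first by rewrite uv mulr1.
by rewrite mulrA -(mulrA v x u) cxu mulrA vu mul1r.
Qed.

Theorem corollary3p4 (R : pzRingType) (s : involution R) (a : R) :
  (strongly_star_regular s a -> strongly_pi_star_regular s a) /\
  (strongly_pi_star_regular s a -> strongly_star_clean s a).
Proof.
split.
  move=> [p [u [[pp sp] [Hu [a1 a2]]]]].
  exists p, u, 1%N; split => //; split => //; split => //.
  split; first by rewrite expr1.
  split; first by rewrite {1}a2 -mulrA pp -a2 {2}a1 mulrA pp -a1.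
  split; first by rewrite {1}a2 -mulrA -a1.
  by rewrite -a1 -a2.
move=> [e [u [m [m1 [[ee se] [[v [uv vu]] [am [cae [cau ceu]]]]]]]]].
have cav : GRing.comm a v by apply: comm_inv uv vu cau.
have cev : GRing.comm e v by apply: comm_inv uv vu ceu.
pose f := 1 - e.
have ef : e * f = 0 by rewrite /f mulrBr mulr1 ee subrr.
have fe : f * e = 0 by rewrite /f mulrBl mul1r ee subrr.
have ef1 : e + f = 1 by rewrite /f addrC subrK.
have ff : f * f = f by rewrite {1}/f mulrBl mul1r ef subr0.
have caf : GRing.comm a f by apply: commrB; [apply: commr1| ].
have cef : GRing.comm e f by apply: commrB; [apply: commr1| apply: commr_refl].
have pf : is_projection s f by split => //; rewrite /f inv_add invN inv1 se.
have cvf : GRing.comm v f by rewrite /f; apply: commrB; [apply: commr1 | apply: commr_sym].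
clearbody f.
pose S := \sum_(i < m) a ^+ i.
pose W := a ^+ m.-1 * v.
have cSa : GRing.comm S a.
  by apply/commr_sym/commr_sum => i _; apply: commrX; apply: commr_refl.
have cSe : GRing.comm S e.
  by apply/commr_sym/commr_sum => i _; apply: commrX; apply: commr_sym.
have cSf : GRing.comm S f.
  by apply/commr_sym/commr_sum => i _; apply: commrX; apply: commr_sym.
have cWa : GRing.comm W a.
  by apply/commr_sym; apply: commrM => //; apply: commrX; apply: commr_refl.
have cWe : GRing.comm W e.
  by apply/commr_sym; apply: commrM => //; apply: commrX; apply: commr_sym.
have cWf : GRing.comm W f.
  apply/commr_sym; apply: commrM; first by apply: commrX; apply: commr_sym.
  exact: commr_sym.
have HS : (a - 1) * S = e * u - 1 by rewrite -subrX1 am.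
have HS' : S * (a - 1) = e * u - 1.
  by rewrite -HS; apply: commrB => //; apply: commr1.
have HW : a * W = u * e * v.
  by rewrite /W mulrA -exprS prednK // am ceu.
clearbody S W.
exists f, (a - f); split => //.
split; last first.
  split; first by rewrite addrCA subrr addr0.
  rewrite /GRing.comm mulrBl mulrBr caf //.
exists (e * W - f * S).
have yx : (a - f) * (e * W - f * S) = 1.
  have -> : a - f = e * a + f * (a - 1).
    by rewrite mulrBr mulr1 addrA -mulrDl ef1 mul1r.
  have ca1e : GRing.comm (a - 1) e.
    by apply/commr_sym; apply: commrB; [apply/commr_sym|apply: commr1].
  have t1 : e * a * (e * W) = e.
    rewrite -mulrA (mulrA a e) cae -mulrA mulrA ee HW.
    by rewrite -(mulrA u) cev (mulrA u v) uv mul1r ee.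
  have t2 : e * a * (f * S) = 0.
    by rewrite -mulrA (mulrA a f) caf -mulrA mulrA ef mul0r.
  have t3 : f * (a - 1) * (e * W) = 0.
    by rewrite -mulrA (mulrA (a - 1) e) ca1e -mulrA (mulrA f e) fe mul0r.
  have t4 : f * (a - 1) * (f * S) = - f.
    have ca1f : GRing.comm (a - 1) f.
      by apply/commr_sym; apply: commrB; [apply/commr_sym|apply: commr1].
    rewrite -mulrA (mulrA (a - 1) f) ca1f -mulrA (mulrA f f) ff HS.
    by rewrite mulrBr mulr1 mulrA fe mul0r sub0r.
  by rewrite mulrBr !mulrDl t1 t2 t3 t4 addr0 add0r opprK ef1.
split => //.
have cy : GRing.comm (a - f) (e * W - f * S).
  have cye : GRing.comm (a - f) e.
    by apply/commr_sym; apply: commrB; [exact: commr_sym | exact: cef].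
  have cyf : GRing.comm (a - f) f.
    by apply/commr_sym; apply: commrB; [exact: commr_sym | exact: commr_refl].
  have cyS : GRing.comm (a - f) S by apply/commr_sym; apply: commrB.
  have cyW : GRing.comm (a - f) W by apply/commr_sym; apply: commrB.
  by apply: commrB; apply: commrM.
by rewrite -cy.
Qed.
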